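(* Let $\mathcal{L}$ be a homogeneous, translation-invariant linear equation $c_1x_1+\cdots+c_\ell x_\ell=0$, and let $S$ be a finite $\mathcal{L}$-free set of integers. Then for all but finitely many positive integers $\alpha$, the set $S+\alpha=\{s+\alpha:s\in S\}$ is $\mathcal{L}$-sub-equation-free.
   Context: $\mathcal{L}$ is translation-invariant if $\sum_i c_i=0$. A solution of an equation $d_1x_1+\dots+d_m x_m=0$ in $A$ is a tuple in $A^m$ satisfying it; it is trivial if there is a partition $P_1,\dots,P_k$ of $\{1,\dots,m\}$ with $x_i=x_j$ whenever $i,j$ are in the same class and $\sum_{i\in P_r}d_i=0$ for every $r$. $A$ is $\mathcal{L}$-free if it contains no non-trivial solution to $\mathcal{L}$. A proper sub-equation of $\mathcal{L}$ is obtained by deleting a non-empty set of terms (leaving at least one). A set is $\mathcal{L}$-sub-equation-free if it is $\mathcal{L}$-free and contains no non-trivial solution to any proper sub-equation of $\mathcal{L}$. *)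

(* Defs.v *)
From mathcomp Require Import all_boot all_order all_algebra.
Set Implicit Arguments. Unset Strict Implicit. Unset Printing Implicit Defensive.
Import Order.TTheory GRing.Theory Num.Theory.
Local Open Scope ring_scope.

(* A linear equation d_1 x_1 + ... + d_m x_m = 0 is represented by its
   coefficient sequence d : seq int. *)

Definition translation_invariant (d : seq int) : Prop := \sum_(a <- d) a = 0.

Definition is_solution (d : seq int) (A : pred int) (x : seq int) : Prop :=
  size x = size d /\ all A x /\ \sum_(i < size d) d`_i * x`_i = 0.

(* trivial solution: there is a partition of the index set (given by class
   labels p) such that x is constant on classes and the coefficients in every
   class sum to 0. *)
Definition trivial_solution (d : seq int) (x : seq int) : Prop :=
  exists p : 'I_(size d) -> 'I_(size d),
    (forall i j, p i = p j -> x`_i = x`_j) /\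
    (forall r, \sum_(i | p i == r) d`_i = 0).

Definition L_free (d : seq int) (A : pred int) : Prop :=
  forall x, is_solution d A x -> trivial_solution d x.

(* proper sub-equation: delete a non-empty set of terms, keeping at least one *)
Definition proper_subeq (d e : seq int) : Prop :=
  exists b : bitseq, [/\ size b = size d, true \in b, false \in b & e = mask b d].

Definition L_subeq_free (d : seq int) (A : pred int) : Prop :=
  L_free d A /\ forall e, proper_subeq d e -> L_free e A.

Definition shift (S : seq int) (alpha : int) : pred int :=
  fun y => (y - alpha) \in S.

(* Main.v *)
Require Import Defs.
From mathcomp Require Import all_boot all_order all_algebra zify.
Set Implicit Arguments. Unset Strict Implicit. Unset Printing Implicit Defensive.
Import Order.TTheory GRing.Theory Num.Theory.
Local Open Scope ring_scope.

Lemma zip_ord (d x : seq int) (P : pred int) :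
  size x = size d ->
  \sum_(pr <- zip d x | P pr.2) pr.1 = \sum_(i < size d | P x`_i) d`_i.
Proof.
move=> Hs; rewrite (big_nth (0,0)) size_zip Hs minnn big_mkord.
by apply: eq_big => [i|i _]; rewrite nth_zip.
Qed.

Lemma sum_ord (d : seq int) : \sum_(a <- d) a = \sum_(i < size d) d`_i.
Proof. by rewrite (big_nth 0) big_mkord. Qed.

Lemma trivial_val (d x : seq int) : size x = size d ->
  trivial_solution d x -> forall v, \sum_(i < size d | x`_i == v) d`_i = 0.
Proof.
move=> Hs [p [Hp1 Hp2]] v.
rewrite (partition_big p xpredT) //=.
apply: big1 => r _.
case: (pickP (fun i => (p i == r) && (x`_i == v))) => [i0 /andP[/eqP Hi0 /eqP Hv]|H0].
  rewrite -[RHS](Hp2 r); apply: eq_bigl => i.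
  case E: (p i == r); rewrite ?andbF ?andbT //.
  by rewrite (Hp1 i i0) ?Hv ?eqxx // Hi0 (eqP E).
by apply: big_pred0 => i; rewrite andbC H0.
Qed.

Lemma val_trivial (d x : seq int) :
  (forall v, \sum_(i < size d | x`_i == v) d`_i = 0) -> trivial_solution d x.
Proof.
move=> Hv.
pose p (i : 'I_(size d)) := odflt i [pick j : 'I_(size d) | x`_j == x`_i].
have pa : forall i, x`_(p i) = x`_i.
  move=> i; rewrite /p; case: pickP => [j /eqP //|//].
have pb : forall i k : 'I_(size d), x`_i = x`_k -> p i = p k.
  move=> i k E; rewrite /p E; case: pickP => [//|H].
  by move: (H k); rewrite eqxx.
exists p; split.
  by move=> i j E; rewrite -(pa i) -(pa j) E.
move=> r.
case: (pickP (fun i => p i == r)) => [i0 /eqP Hi0|H0]; last first.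
  by apply: big_pred0.
have Hr : p r = r.
  by rewrite -Hi0; apply: pb; rewrite pa.
rewrite -[RHS](Hv x`_r); apply: eq_bigl => i.
apply/eqP/eqP => [E|E].
  by rewrite -(pa i) E.
by rewrite (pb _ _ E) Hr.
Qed.

Lemma shift_free (d S : seq int) (a : int) :
  \sum_(z <- d) z = 0 -> L_free d (fun y => y \in S) -> L_free d (shift S a).
Proof.
move=> H0 HF x [Hs [Hall Hsum]].
have [|p [H1 H2]] := HF (map (fun y => y - a) x).
  split; first by rewrite size_map.
  split; first by rewrite all_map; apply: sub_all Hall.
  transitivity (\sum_(i < size d) (d`_i * x`_i - d`_i * a)).
    by apply: eq_bigr => i _; rewrite (nth_map 0) ?Hs // mulrBr.
  by rewrite sumrB Hsum -mulr_suml -sum_ord H0 mul0r subr0.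
exists p; split => // i j /H1; rewrite !(nth_map 0) ?Hs //; apply: addIr.
Qed.

Lemma mask_split (T : Type) (b : bitseq) (s : seq T) (F : T -> int) :
  size b = size s ->
  \sum_(z <- s) F z = \sum_(z <- mask b s) F z + \sum_(z <- mask (map negb b) s) F z.
Proof.
elim: s b => [|x s IH] [|c b] //=; first by rewrite !big_nil addr0.
move=> [Hs]; case: c => /=; rewrite !big_cons (IH b Hs); [by rewrite addrA | by rewrite addrCA].
Qed.

Fixpoint fill (s0 : int) (b : bitseq) (y : seq int) : seq int :=
  match b with
  | [::] => [::]
  | true :: b' => head s0 y :: fill s0 b' (behead y)
  | false :: b' => s0 :: fill s0 b' y
  end.

Lemma size_fill s0 b y : size (fill s0 b y) = size b.
Proof. by elim: b y => [|[] b IH] y //=; rewrite IH. Qed.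

Lemma all_fill (P : pred int) s0 b y : P s0 -> all P y -> all P (fill s0 b y).
Proof.
move=> H0; elim: b y => [|[] b IH] y //= Hy.
- case: y Hy => [|z y] /=; first by rewrite H0 IH.
  by case/andP => -> /IH.
- by rewrite H0 IH.
Qed.

Lemma fill_sum s0 b (c y : seq int) (F : int * int -> int) :
  size b = size c -> size y = count id b ->
  \sum_(pr <- zip c (fill s0 b y)) F pr =
  \sum_(pr <- zip (mask b c) y) F pr + \sum_(z <- mask (map negb b) c) F (z, s0).
Proof.
elim: b c y => [|e b IH] [|x c] y //=.
  by move=> _ /size0nil ->; rewrite !big_nil addr0.
move=> [Hs]; case: e => /=.
  case: y => [|z y] //= [Hy].
  by rewrite !big_cons IH // addrA.
by move=> Hy; rewrite !big_cons IH // addrCA.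
Qed.

Lemma elem_bound (S : seq int) t : t \in S -> `|t| <= \sum_(u <- S) `|u|.
Proof.
elim: S => [|u S IH] //; rewrite inE big_cons => /orP[/eqP->|/IH h].
  by rewrite lerDl sumr_ge0.
by apply: (le_trans h); rewrite lerDr.
Qed.

Lemma nosol (e S : seq int) (a : int) :
  \sum_(z <- e) z != 0 -> 0 <= a ->
  (\sum_(t <- S) `|t|) * (\sum_(z <- e) `|z|) < a -> L_free e (shift S a).
Proof.
move=> Hne Ha Hlt x [Hs [Hall Hsum]]; exfalso.
set M := \sum_(t <- S) `|t| in Hlt.
have HM : forall i : 'I_(size e), `|x`_i - a| <= M.
  move=> i; apply: elem_bound.
  by move/all_nthP: Hall => /(_ 0 i); rewrite Hs => /(_ (ltn_ord i)).
have E : \sum_(i < size e) e`_i * (x`_i - a) + a * \sum_(z <- e) z = 0.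
  rewrite sum_ord mulr_sumr -big_split /= -[RHS]Hsum; apply: eq_bigr => i _.
  by rewrite mulrBr [a * _]mulrC subrK.
have B : `|\sum_(i < size e) e`_i * (x`_i - a)| <= M * \sum_(z <- e) `|z|.
  apply: (le_trans (ler_norm_sum _ _ _)).
  rewrite (big_nth 0) big_mkord mulr_sumr; apply: ler_sum => i _.
  by rewrite normrM mulrC ler_wpM2r.
move: E => /eqP; rewrite addr_eq0 => /eqP E.
rewrite E normrN normrM (ger0_norm Ha) in B.
have : a <= M * \sum_(z <- e) `|z| by move: Hne B Ha; clear; nia.
by rewrite leNgt Hlt.
Qed.

Lemma zip_prod (d x : seq int) : size x = size d ->
  \sum_(i < size d) d`_i * x`_i = \sum_(pr <- zip d x) pr.1 * pr.2.
Proof.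
move=> Hs; rewrite (big_nth (0,0)) size_zip Hs minnn big_mkord.
by apply: eq_bigr => i _; rewrite nth_zip.
Qed.

Lemma subfree (c : seq int) b (S : seq int) :
  size b = size c -> \sum_(z <- c) z = 0 -> \sum_(z <- mask b c) z = 0 ->
  L_free c (fun y => y \in S) -> L_free (mask b c) (fun y => y \in S).
Proof.
move=> Hb Hc He HF y [Hs [Hall Hsum]].
apply: val_trivial => v; rewrite -(zip_ord (fun t => t == v)) //.
case: y Hs Hall Hsum => [|z y'] Hs Hall Hsum.
  have -> : zip (mask b c) [::] = [::] by case: (mask b c).
  by rewrite big_nil.
have Hsz : size (z :: y') = count id b by rewrite Hs size_mask.
have Hnb : \sum_(t <- mask (map negb b) c) t = 0.
  by move: Hc; rewrite (mask_split (fun t => t) Hb) He add0r.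
have zS : z \in S by case/andP: Hall.
set x := fill z b (z :: y').
have Hx : size x = size c by rewrite size_fill.
have [] := HF x.
  split => //; split; first by apply: all_fill.
  rewrite zip_prod // fill_sum // -zip_prod // Hsum add0r.
  by rewrite -mulr_suml Hnb mul0r.
move=> p Hp.
have := trivial_val Hx (ex_intro _ p Hp) v.
rewrite -(zip_ord (fun t => t == v)) // big_mkcond => H.
have E := fill_sum z (fun pr => if pr.2 == v then pr.1 else 0) Hb Hsz.
have H2 : \sum_(z0 <- mask (map negb b) c) (if z == v then z0 else 0) = 0.
  by case: (z == v); [rewrite Hnb | rewrite big1].
rewrite E H2 addr0 in H.
by rewrite big_mkcond.
Qed.

Theorem mainTheorem11 (c : seq int) (S : seq int) :
  all (fun a => a != 0) c ->
  translation_invariant c ->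
  L_free c (fun y => y \in S) ->
  exists N : nat, forall alpha : nat, (N < alpha)%N ->
    L_subeq_free c (shift S alpha%:Z).
Proof.
move=> _ Hc HF.
set M := \sum_(t <- S) `|t|.
set K := \sum_(z <- c) `|z|.
have M0 : 0 <= M by apply: sumr_ge0.
have MK0 : 0 <= M * K by rewrite mulr_ge0 ?sumr_ge0.
exists (absz (M * K)) => alpha Hlt.
have Ha : M * K < alpha%:Z by rewrite -[M * K]gez0_abs // ltz_nat.
split; first by apply: shift_free.
move=> e [b [Hb _ _ ->]].
case: (boolP (\sum_(z <- mask b c) z == 0)) => [/eqP He | Hne].
  by apply: shift_free => //; apply: subfree.
apply: nosol => //; apply: le_lt_trans Ha.
rewrite ler_wpM2l // /K (mask_split (fun z => `|z|) Hb) lerDl.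
exact: sumr_ge0.
Qed.
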